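(* Let $p$ be a prime. Then $$I_{p^{p+1}}=\Big(p,\prod_{i=0}^{p-1}(X-i)\Big)^{p+1}+\big(H(X)\big),\qquad H(X)=\prod_{i=0}^{p^2-1}(X-i).$$
   Context: $I_{p^n}=p^n\mathrm{Int}(\mathbb{Z})\cap\mathbb{Z}[X]=\{f\in\mathbb{Z}[X] : p^n\mid f(a)\text{ for all }a\in\mathbb{Z}\}$, where $\mathrm{Int}(\mathbb{Z})=\{f\in\mathbb{Q}[X]: f(\mathbb{Z})\subseteq\mathbb{Z}\}$. *)

(* Defs.v *)
From HB Require Import structures.
From mathcomp Require Import all_boot all_order all_algebra.
Set Implicit Arguments. Unset Strict Implicit. Unset Printing Implicit Defensive.
Import Order.TTheory GRing.Theory Num.Theory.
Local Open Scope ring_scope.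

Definition polyZ := {poly int}.

Definition Ipn (p n : nat) (f : {poly int}) : Prop :=
  forall a : int, ((p ^ n)%N%:Z %| f.[a])%Z.

Definition ideal_gen (S : {poly int} -> Prop) (f : {poly int}) : Prop :=
  exists s : seq ({poly int} * {poly int}),
    (forall q, q \in s -> S q.2) /\ f = \sum_(q <- s) q.1 * q.2.

Definition ideal_mul (I J : {poly int} -> Prop) : {poly int} -> Prop :=
  ideal_gen (fun h => exists a b, I a /\ J b /\ h = a * b).

Definition ideal_add (I J : {poly int} -> Prop) (f : {poly int}) : Prop :=
  exists a b, I a /\ J b /\ f = a + b.

Definition ideal_pow (I : {poly int} -> Prop) (n : nat) : {poly int} -> Prop :=
  iter n (ideal_mul I) (ideal_gen (fun h => h = 1)).

Definition fallX (m : nat) : {poly int} := \prod_(i < m) ('X - (i%:R)%:P).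

(* Main.v *)
Require Import Defs.
From HB Require Import structures.
From mathcomp Require Import all_boot all_order all_algebra.
From mathcomp Require Import ring zify.
Import Order.TTheory GRing.Theory Num.Theory.
Local Open Scope ring_scope.
Definition is_id (T : {poly int} -> Prop) :=
  [/\ T 0, (forall x y, T x -> T y -> T (x + y)) & (forall c x, T x -> T (c * x))].

Lemma id_sum T (I : eqType) (s : seq I) (F : I -> {poly int}) :
  is_id T -> (forall i, i \in s -> T (F i)) -> T (\sum_(i <- s) F i).
Proof.
move=> [T0 TD TM]; elim: s => [|x s IH] H; first by rewrite big_nil.
rewrite big_cons; apply: TD; first by apply: H; rewrite inE eqxx.
by apply: IH => i hi; apply: H; rewrite inE hi orbT.
Qed.

Lemma gen_id S : is_id (ideal_gen S).
Proof.
split.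
- by exists [::]; split => //; rewrite big_nil.
- move=> x y [s [Hs ->]] [t [Ht ->]]; exists (s ++ t); split; last by rewrite big_cat.
  by move=> q; rewrite mem_cat => /orP [/Hs|/Ht].
- move=> c x [s [Hs ->]]; exists (map (fun q => (c * q.1, q.2)) s); split.
  + by move=> q /mapP [q' /Hs h ->].
  + by rewrite big_map mulr_sumr; apply: eq_bigr => q _; rewrite mulrA.
Qed.

Lemma gen_in S x : S x -> ideal_gen S x.
Proof. by move=> Sx; exists [:: (1, x)]; split; [move=> q; rewrite inE => /eqP -> | rewrite big_seq1 mul1r]. Qed.

Lemma gen_sub S T : is_id T -> (forall h, S h -> T h) -> forall x, ideal_gen S x -> T x.
Proof.
move=> idT ST x [s [Hs ->]]; apply: id_sum => // q /Hs /ST; case: idT => _ _; apply.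
Qed.

Lemma pow_id I n : is_id (ideal_pow I n).
Proof. by case: n => [|n]; apply: gen_id. Qed.

Lemma pow0_all I x : ideal_pow I 0 x.
Proof. by rewrite -[x]mulr1; case: (gen_id (fun h => h = 1)) => _ _; apply; apply: gen_in. Qed.

Lemma pow_S I n a b : I a -> ideal_pow I n b -> ideal_pow I n.+1 (a * b).
Proof. by move=> Ia Pb; apply: gen_in; exists a, b. Qed.

Lemma pow_mul I a b x y : ideal_pow I a x -> ideal_pow I b y -> ideal_pow I (a + b) (x * y).
Proof.
elim: a x => [|a IH] x Hx Hy.
  by rewrite add0n; case: (pow_id I b) => _ _; apply.
rewrite addSn; case: Hx => s [Hs ->]; rewrite mulr_suml.
apply: id_sum; first exact: pow_id.
move=> q /Hs [u [v [Iu [Pv ->]]]].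
rewrite -!mulrA; case: (pow_id I (a + b).+1) => _ _; apply.
by apply: pow_S => //; apply: IH.
Qed.

Lemma Ipn_id p n : is_id (Ipn p n).
Proof.
split.
- by move=> a; rewrite horner0 dvdz0.
- by move=> x y Hx Hy a; rewrite hornerD rpredD.
- by move=> c x Hx a; rewrite hornerM dvdz_mull.
Qed.
Lemma rising_fact b n : ((\prod_(i < n) (b.+1 + i)) * b`! = (b + n)`!)%N.
Proof.
elim: n => [|n IH]; first by rewrite big_ord0 mul1n addn0.
rewrite big_ord_recr /= mulnAC IH addnS factS; ring.
Qed.

Lemma fact_dvd_fall (a : int) n :
  ((n`!)%:Z %| \prod_(i < n) (a - i%:R))%Z.
Proof.
case: a => b.
- case: (ltnP b n) => hb.
    by rewrite (bigD1 (Ordinal hb)) //= natz subrr mul0r dvdz0.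
  have -> : \prod_(i < n) ((Posz b) - i%:R) = ((b ^_ n)%N)%:R.
    rewrite ffact_prod natr_prod; apply: eq_bigr => i _.
    by rewrite natrB ?natz // (leq_trans (ltnW (ltn_ord i)) hb).
  by rewrite -bin_ffact natrM dvdz_mull // natz dvdzz.
- have -> : \prod_(i < n) (Negz b - i%:R) = \prod_(i < n) ((-1) * ((b.+1 + i)%N%:R)).
    by apply: eq_bigr => i _; rewrite NegzE !natz; lia.
  rewrite big_split /= dvdz_mull //.
  have : ((n`! %| \prod_(i < n) (b.+1 + i))%N).
    have := bin_fact (leq_addl b n); rewrite addnK -rising_fact mulnA.
    move/(congr1 (fun x => x %/ b`!)%N); rewrite !mulnK ?fact_gt0 // => <-.
    exact: dvdn_mull.
  by rewrite -natr_prod dvdzE /= natz.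
Qed.
Lemma fallX_monic m : fallX m \is monic.
Proof. exact: monic_prod_XsubC. Qed.

Lemma size_fallX m : size (fallX m) = m.+1.
Proof. rewrite /fallX size_prod_XsubC; congr (_.+1).
have := deprecated_filter_index_enum (@predT 'I_m); rewrite filter_predT => ->.
exact: size_enum_ord. Qed.

Lemma fallX_eval n (b : nat) : (fallX n).[b%:R] = ((b ^_ n)%N)%:R.
Proof.
rewrite /fallX horner_prod.
case: (ltnP b n) => hb.
  by rewrite (bigD1 (Ordinal hb)) //= hornerXsubC subrr mul0r ffact_small.
rewrite ffact_prod natr_prod; apply: eq_bigr => i _.
by rewrite hornerXsubC natrB // (leq_trans (ltnW (ltn_ord i)) hb).
Qed.

Lemma fallX_nat m : fallX m = \prod_(0 <= i < m) ('X - (i%:R)%:P).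
Proof. by rewrite /fallX big_mkord. Qed.

Lemma fact_split p k : prime p -> (k < p ^ 2)%N ->
  exists u, (k`! = p ^ (k %/ p) * u)%N /\ coprime p u.
Proof.
move=> pp; have p0 := prime_gt0 pp.
elim: k => [|k IH] hk; first by exists 1%N; rewrite div0n /= coprimen1.
have [u [ku cu]] := IH (ltnW hk).
rewrite factS (divnS _ p0); case: (boolP (p %| k.+1)%N) => hd /=.
  have [m hm] := dvdnP hd.
  have mp : (m < p)%N.
    by rewrite -(ltn_pmul2r p0) -hm (leq_trans hk) // expnS expn1.
  have m0 : (0 < m)%N by case: m hm {mp}.
  exists (m * u)%N; split.
    by rewrite ku hm expnS; ring.
  rewrite coprimeMr cu andbT prime_coprime //; apply/negP => /(dvdn_leq m0).
  by rewrite leqNgt mp.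
exists (k.+1 * u)%N; split; first by rewrite ku add0n; ring.
by rewrite coprimeMr cu andbT prime_coprime.
Qed.

Lemma fact_p2 p : prime p -> (p ^ p.+1 %| (p ^ 2)`!)%N.
Proof.
move=> pp; have p0 := prime_gt0 pp.
have p2 : (0 < p ^ 2)%N by rewrite expn_gt0 p0.
have [q hq] : exists q, p = q.+1 by case: p pp p0 {p2} => // q; exists q.
have hk : ((p ^ 2).-1 < p ^ 2)%N by rewrite prednK.
have [u [ku _]] := fact_split _ _ pp hk.
have e : ((p ^ 2).-1 = q * p + q)%N by rewrite hq; nia.
have e2 : ((p ^ 2).-1 %/ p = q)%N by rewrite e divnMDl // divn_small ?addn0 // hq.
have -> : ((p ^ 2)`! = p ^ 2 * ((p ^ 2).-1)`!)%N by rewrite -[in LHS](prednK p2) factS prednK.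
rewrite ku e2 mulnA -expnD addnC addn2 hq; exact: dvdn_mulr.
Qed.

Definition Jp (p : nat) := ideal_gen (fun h => h = (p%:R)%:P \/ h = fallX p).

Lemma Ipn_mul p m n x y : Ipn p m x -> Ipn p n y -> Ipn p (m + n) (x * y).
Proof.
move=> hx hy a; rewrite hornerM expnD PoszM; exact: dvdz_mul.
Qed.

Lemma Jp_Ipn p x : prime p -> Jp p x -> Ipn p 1 x.
Proof.
move=> pp; apply: gen_sub; first exact: Ipn_id.
move=> h [->|->] a; rewrite expn1.
  by rewrite hornerC natz dvdzz.
rewrite /fallX horner_prod.
under eq_bigr do rewrite hornerXsubC.
apply: dvdz_trans (fact_dvd_fall a p).
by rewrite dvdzE /=; apply: dvdn_fact; rewrite prime_gt0 //=.
Qed.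

Lemma pow_Ipn p n x : prime p -> ideal_pow (Jp p) n x -> Ipn p n x.
Proof.
move=> pp; elim: n x => [|n IH] x.
  by move=> _ a; rewrite expn0 dvd1z.
apply: gen_sub; first exact: Ipn_id.
move=> h [a [b [Ja [Pb ->]]]]; rewrite -add1n.
by apply: Ipn_mul; [apply: Jp_Ipn | apply: IH].
Qed.

Lemma H_Ipn p : prime p -> Ipn p p.+1 (fallX (p ^ 2)).
Proof.
move=> pp a; rewrite /fallX horner_prod.
under eq_bigr do rewrite hornerXsubC.
apply: dvdz_trans (fact_dvd_fall a _).
by rewrite dvdzE /=; apply: fact_p2.
Qed.

Definition cng (p : nat) (u v : {poly int}) := exists h, u - v = (p%:R)%:P * h.

Lemma cng_mul p u1 u2 v1 v2 : cng p u1 v1 -> cng p u2 v2 -> cng p (u1 * u2) (v1 * v2).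
Proof.
move=> [h1 e1] [h2 e2]; exists (h1 * u2 + v1 * h2).
have -> : u1 * u2 - v1 * v2 = (u1 - v1) * u2 + v1 * (u2 - v2) by ring.
by rewrite e1 e2; ring.
Qed.

Lemma Jp_in_p p : Jp p (p%:R)%:P.
Proof. by apply: gen_in; left. Qed.

Lemma Jp_block p j :
  Jp p (\prod_(s < p) ('X - ((s + j * p)%N%:R)%:P)).
Proof.
have [h eh] : cng p (\prod_(s < p) ('X - ((s + j * p)%N%:R)%:P)) (fallX p).
  apply: (big_ind2 (cng p)) => //.
  - by exists 0; rewrite subrr mulr0.
  - by move=> *; apply: cng_mul.
  move=> s _; exists (- (j%:R))%:P.
  rewrite !natrD !natrM !(polyCD, polyCN, polyCM); ring.
have -> : \prod_(s < p) ('X - ((s + j * p)%N%:R)%:P) = fallX p + (p%:R)%:P * h.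
  by rewrite -eh; ring.
case: (gen_id (fun h => h = (p%:R)%:P \/ h = fallX p)) => _ hD hM.
apply: hD; first by apply: gen_in; right.
by rewrite mulrC; apply: hM; apply: Jp_in_p.
Qed.

Lemma fallX_jp p j : ideal_pow (Jp p) j (fallX (j * p)).
Proof.
elim: j => [|j IH]; first exact: pow0_all.
rewrite fallX_nat (@big_cat_nat _ _ _ (j * p)%N) //=; last by rewrite mulSn leq_addl.
rewrite -fallX_nat mulrC.
have -> : \prod_(j * p <= i < j.+1 * p) ('X - (i%:R)%:P : {poly int}) =
  \prod_(s < p) ('X - ((s + j * p)%N%:R)%:P).
  by rewrite -[in LHS](add0n (j * p)%N) big_addn mulSn addnK big_mkord.
by apply: pow_S => //; apply: Jp_block.
Qed.

Lemma fallX_in p j r : ideal_pow (Jp p) j (fallX (j * p + r)).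
Proof.
rewrite fallX_nat (@big_cat_nat _ _ _ (j * p)%N) //= ?leq_addr // -fallX_nat mulrC.
by case: (pow_id (Jp p) j) => _ _; apply; apply: fallX_jp.
Qed.

Lemma ppow_in p e : ideal_pow (Jp p) e ((p%:R)%:P ^+ e).
Proof.
elim: e => [|e IH]; first exact: pow0_all.
by rewrite exprS; apply: pow_S => //; apply: Jp_in_p.
Qed.

Lemma fallX_small m (a : nat) : (a < m)%N -> (fallX m).[a%:R] = 0.
Proof. by move=> h; rewrite fallX_eval ffact_small. Qed.

Lemma coef_divisible p m (c : int) : prime p -> (m < p ^ 2)%N ->
  ((p ^ p.+1)%N%:Z %| c * (m`!)%:R)%Z ->
  ideal_pow (Jp p) p.+1 (c%:P * fallX m).
Proof.
move=> pp hm hd; have p0 := prime_gt0 pp.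
have [u [ku cu]] := fact_split _ _ pp hm.
set j := (m %/ p)%N in ku.
have jp : (j < p)%N by rewrite ltn_divLR // -expnSr.
set e := (p.+1 - j)%N.
have ej : (e + j = p.+1)%N.
  by rewrite /e; lia.
have he : ((p ^ e)%N%:Z %| c)%Z.
  move: hd; rewrite ku -ej !dvdzE abszM natz /= expnD mulnCA [X in (_ %| X)%N]mulnC.
  rewrite dvdn_pmul2r ?expn_gt0 ?p0 // Gauss_dvdl //.
  by apply: coprimeXl.
case/dvdzP: he => d ->.
have -> : (d * (p ^ e)%N%:Z)%:P * fallX m = d%:P * ((p%:R)%:P ^+ e * fallX m).
  by rewrite polyCM -natz natrX polyC_exp mulrA.
case: (pow_id (Jp p) p.+1) => _ _; apply.
rewrite -ej; apply: pow_mul; first exact: ppow_in.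
by rewrite (divn_eq m p); apply: fallX_in.
Qed.

Lemma hard p m : prime p -> (m <= p ^ 2)%N -> forall g : {poly int}, (size g <= m)%N ->
  (forall a : nat, (a < m)%N -> ((p ^ p.+1)%N%:Z %| g.[a%:R])%Z) ->
  ideal_pow (Jp p) p.+1 g.
Proof.
move=> pp; elim: m => [|m IH] hm g hs hg.
  move: hs; rewrite size_poly_leq0 => /eqP ->.
  by case: (pow_id (Jp p) p.+1).
set c := g`_m.
set g' := g - c%:P * fallX m.
have eg : g = g' + c%:P * fallX m by rewrite /g' subrK.
have hs' : (size g' <= m)%N.
  apply/leq_sizeP => k hk; rewrite /g' coefB coefCM.
  case: (ltngtP k m) => [km|km|->].
  - by move: km; rewrite ltnNge hk.
  - rewrite (leq_sizeP _ _ hs) // (leq_sizeP _ _ (leqnn (size (fallX m)))) ?size_fallX // mulr0 subr0 //.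
  - have := fallX_monic m; rewrite monicE lead_coefE size_fallX /= => /eqP ->.
    by rewrite mulr1 subrr.
have hg' : ideal_pow (Jp p) p.+1 g'.
  apply: IH => //; first exact: ltnW.
  move=> a ha; rewrite /g' hornerD hornerN hornerCM fallX_small ?mulr0 ?subr0.
    by apply: hg; apply: ltnW.
  done.
rewrite eg; case: (pow_id (Jp p) p.+1) => _ hD _; apply: hD => //.
apply: coef_divisible => //.
have := hg m (ltnSn m); rewrite {1}eg hornerD hornerCM fallX_eval ffactnn.
have := pow_Ipn _ _ _ pp hg' m%:R.
move=> h1 h2; have := rpredB h2 h1; rewrite addrAC subrr add0r.
done.
Qed.

Theorem mainTheorem18 (p : nat) (hp : prime p) (f : {poly int}) :
  Ipn p p.+1 f <->
  ideal_add
    (ideal_pow (ideal_gen (fun h => h = (p%:R)%:P \/ h = fallX p)) p.+1)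
    (ideal_gen (fun h => h = fallX (p ^ 2)%N)) f.
Proof.
split.
- move=> hf.
  have mH := fallX_monic (p ^ 2)%N.
  have ef := Pdiv.RingMonic.rdivp_eq mH f.
  set q := Pdiv.Ring.rdivp f _ in ef; set r := Pdiv.Ring.rmodp f _ in ef.
  have hr : (size r <= p ^ 2)%N.
    rewrite -ltnS -(size_fallX (p ^ 2)%N); apply: Pdiv.Ring.ltn_rmodpN0.
    by rewrite -size_poly_eq0 size_fallX.
  exists r, (q * fallX (p ^ 2)%N); split; last split.
  + apply: (hard _ _ hp (leqnn _)) => // a ha.
    have -> : r = f - q * fallX (p ^ 2)%N by rewrite [in RHS]ef addrC addKr.
    by rewrite hornerD hornerN hornerM fallX_small // mulr0 subr0.
  + case: (gen_id (fun h => h = fallX (p ^ 2)%N)) => _ _; apply; exact: gen_in.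
  + by rewrite addrC -ef.
- move=> [a [b [ha [hb ->]]]].
  case: (Ipn_id p p.+1) => _ hD _; apply: hD.
    exact: (pow_Ipn _ _ _ hp ha).
  by move: hb; apply: gen_sub; [exact: Ipn_id | move=> h ->; apply: H_Ipn].
Qed.
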